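(* Let $\Theta$ be a finite set of rules $(\Delta,\psi)$ (with $\Delta$ a finite set of formulas and $\psi$ a formula). For every set of formulas $\Gamma$ and formula $\varphi$: $\Gamma\vdash_{\mathsf{NeL}+\Theta}\varphi$ iff $\Gamma\models_{\mathfrak{N}_w^{\Theta}}\varphi$.
   Context: Formulas are built from a countably infinite set of variables using binary $\otimes,\circ$ and unary ${}^{*}$; $\mathbf{Fm}$ is the formula algebra. Abbreviations (also term operations in algebras): $\varphi\Rightarrow\psi:=(\varphi\circ\psi^{*})^{*}$; $\varphi\Leftrightarrow\psi:=(\varphi\Rightarrow\psi)\otimes(\psi\Rightarrow\varphi)$; $\varphi\not\Leftrightarrow\psi:=(\varphi\Leftrightarrow\psi)^{*}$; $\varphi\not\Leftrightarrow\psi\not\Leftrightarrow\chi:=((\varphi\not\Leftrightarrow\psi)\otimes(\varphi\not\Leftrightarrow\chi))\otimes(\psi\not\Leftrightarrow\chi)$. $\mathsf{NeL}$: axiom schemes (A1) $\varphi\Rightarrow\varphi$; (A2) $(\varphi\circ\psi)\Rightarrow(\psi\circ\varphi)$; (A3) $\varphi\Rightarrow\varphi^{**}$; (A4) $(\varphi\Rightarrow\psi)\Rightarrow(\varphi\circ\psi)$; (A5) $(\varphi\otimes\psi)\Leftrightarrow(\psi\otimes\varphi)$; (A6) $((\varphi\otimes\psi)\Rightarrow\chi)\Rightarrow((\varphi\otimes\chi^{*})\Rightarrow\psi^{*})$; (A7) $(\varphi\not\Leftrightarrow\psi\not\Leftrightarrow\chi)\Rightarrow((\varphi\Rightarrow\psi)\Rightarrow((\psi\Rightarrow\chi)\Rightarrow(\varphi\Rightarrow\chi)))$;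 rules $\varphi\Rightarrow\psi,\varphi/\psi$; $\varphi,\psi/\varphi\otimes\psi$; $\varphi\Leftrightarrow\psi,\chi/\chi'$ ($\chi'$ from $\chi$ replacing one or more occurrences of $\varphi$ by $\psi$); $\varphi\otimes\psi/\varphi$, applicable to arbitrary formulas. $\mathsf{NeL}+\Theta$ is the least substitution-invariant consequence relation extending $\vdash_{\mathsf{NeL}}$ in which every rule of $\Theta$ holds. A weak $\mathcal{N}$-algebra is an algebra $(A,\otimes,\circ,{}^{*})$ of type $(2,2,1)$ with $\otimes,\circ$ commutative, $x^{**}=x$, and $(x\otimes y)\circ z=(x\otimes z)\circ y$. With $\mathsf{t}\ne\mathsf{f}$ two symbols not in $A$ and $\overline A=A\cup\{\mathsf{t},\mathsf{f}\}$, an $\mathfrak{N}_w$-model is $(\mathbf A,\perp,\{\mathsf{t},\mathsf{f}\})$, $\mathbf A$ a weak $\mathcal{N}$-algebra, $\perp\subseteq\overline A\times\overline A$, such that for all $x,y,z\in A$: (a) $x\perp x^{*}$; (b) $x\perp y^{*}$ and $y\perp x^{*}$ imply $x=y$; (c) $x\perp y$ iff $x\circ y\perp\mathsf{t}$; (d) $x\perp\mathsf{t}$ iff $x^{*}\perp\mathsf{f}$; (e) $x\perp\mathsf{f}$ and $y\perp\mathsf{f}$ iff $x\otimes y\perp\mathsf{f}$; (f) $(x\circ y^{*})^{*}\perp(x\circ y)^{*}$; (g) $x\perp y$ and $x\perp\mathsf{f}$ imply $y\perp\mathsf{t}$; (h) $(x\not\Leftrightarrow y\not\Leftrightarrow z)\perp((x\Rightarrow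 y)\Rightarrow((y\Rightarrow z)\Rightarrow(x\Rightarrow z)))^{*}$. $F_\perp=\{a\in A:a\perp\mathsf{f}\}$. $\mathfrak{N}_w^{\Theta}$ is the class of $\mathfrak{N}_w$-models such that for every $(\Delta,\psi)\in\Theta$ and every homomorphism $h:\mathbf{Fm}\to\mathbf A$, if $h(\delta)\perp\mathsf{f}$ for all $\delta\in\Delta$ then $h(\psi)\perp\mathsf{f}$. For a class $K$ of $\mathfrak{N}_w$-models, $\Gamma\models_K\varphi$ iff there is a finite $\Gamma'\subseteq\Gamma$ such that for every model in $K$ and every homomorphism $h$, $h(\Gamma')\subseteq F_\perp$ implies $h(\varphi)\in F_\perp$. *)

(* Defs.v *)
From Stdlib Require Import List.
Import ListNotations.
Set Implicit Arguments.

Inductive Formula : Type :=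
| Var : nat -> Formula
| Ot  : Formula -> Formula -> Formula
| Ci  : Formula -> Formula -> Formula
| St  : Formula -> Formula.

Definition fimp (p q : Formula) : Formula := St (Ci p (St q)).
Definition fiff (p q : Formula) : Formula := Ot (fimp p q) (fimp q p).
Definition fniff (p q : Formula) : Formula := St (fiff p q).
Definition fniff3 (p q r : Formula) : Formula :=
  Ot (Ot (fniff p q) (fniff p r)) (fniff q r).

Fixpoint subst (s : nat -> Formula) (p : Formula) : Formula :=
  match p with
  | Var n => s n
  | Ot a b => Ot (subst s a) (subst s b)
  | Ci a b => Ci (subst s a) (subst s b)
  | St a => St (subst s a)
  end.

Inductive rep0 (p q : Formula) : Formula -> Formula -> Prop :=
| rep0_refl c : rep0 p q c c
| rep0_here : rep0 p q p q
| rep0_Ot a a' b b' : rep0 p q a a' -> rep0 p q b b' -> rep0 p q (Ot a b) (Ot a' b')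
| rep0_Ci a a' b b' : rep0 p q a a' -> rep0 p q b b' -> rep0 p q (Ci a b) (Ci a' b')
| rep0_St a a' : rep0 p q a a' -> rep0 p q (St a) (St a').

Inductive rep1 (p q : Formula) : Formula -> Formula -> Prop :=
| rep1_here : rep1 p q p q
| rep1_Ot_l a a' b b' : rep1 p q a a' -> rep0 p q b b' -> rep1 p q (Ot a b) (Ot a' b')
| rep1_Ot_r a a' b b' : rep0 p q a a' -> rep1 p q b b' -> rep1 p q (Ot a b) (Ot a' b')
| rep1_Ci_l a a' b b' : rep1 p q a a' -> rep0 p q b b' -> rep1 p q (Ci a b) (Ci a' b')
| rep1_Ci_r a a' b b' : rep0 p q a a' -> rep1 p q b b' -> rep1 p q (Ci a b) (Ci a' b')
| rep1_St a a' : rep1 p q a a' -> rep1 p q (St a) (St a').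

Inductive NeL_axiom : Formula -> Prop :=
| A1 p : NeL_axiom (fimp p p)
| A2 p q : NeL_axiom (fimp (Ci p q) (Ci q p))
| A3 p : NeL_axiom (fimp p (St (St p)))
| A4 p q : NeL_axiom (fimp (fimp p q) (Ci p q))
| A5 p q : NeL_axiom (fiff (Ot p q) (Ot q p))
| A6 p q r : NeL_axiom (fimp (fimp (Ot p q) r) (fimp (Ot p (St r)) (St q)))
| A7 p q r : NeL_axiom
    (fimp (fniff3 p q r) (fimp (fimp p q) (fimp (fimp q r) (fimp p r)))).

Inductive NeL_der (G : Formula -> Prop) : Formula -> Prop :=
| d_hyp p : G p -> NeL_der G p
| d_ax p : NeL_axiom p -> NeL_der G p
| d_mp p q : NeL_der G (fimp p q) -> NeL_der G p -> NeL_der G q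
| d_adj p q : NeL_der G p -> NeL_der G q -> NeL_der G (Ot p q)
| d_rep p q c c' : NeL_der G (fiff p q) -> NeL_der G c -> rep1 p q c c' -> NeL_der G c'
| d_simp p q : NeL_der G (Ot p q) -> NeL_der G p.

Definition CRel := (Formula -> Prop) -> Formula -> Prop.

Definition consequence_relation (C : CRel) : Prop :=
  (forall G p, G p -> C G p) /\
  (forall G G' p, (forall x, G x -> G' x) -> C G p -> C G' p) /\
  (forall G D p, (forall d, D d -> C G d) -> C D p -> C G p).

Definition subst_set (s : nat -> Formula) (G : Formula -> Prop) : Formula -> Prop :=
  fun x => exists g, G g /\ x = subst s g.

Definition substitution_invariant (C : CRel) : Prop :=
  forall s G p, C G p -> C (subst_set s G) (subst s p).

Definition Rule := (list Formula * Formula)%type.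

Definition rule_holds (C : CRel) (r : Rule) : Prop :=
  C (fun x => In x (fst r)) (snd r).

(* Gamma |-_{NeL+Theta} phi : least substitution-invariant consequence relation
   extending |-_NeL in which every rule of Theta holds *)
Definition NeL_Theta_der (Th : list Rule) (G : Formula -> Prop) (p : Formula) : Prop :=
  forall C : CRel,
    consequence_relation C -> substitution_invariant C ->
    (forall G' p', NeL_der G' p' -> C G' p') ->
    (forall r, In r Th -> rule_holds C r) ->
    C G p.

Record weakNalg (A : Type) := {
  aot : A -> A -> A;
  aci : A -> A -> A;
  ast : A -> A;
  aot_comm : forall x y, aot x y = aot y x;
  aci_comm : forall x y, aci x y = aci y x;
  ast_invol : forall x, ast (ast x) = x;
  aot_ci : forall x y z, aci (aot x y) z = aci (aot x z) y
}.

Section AlgOps.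
Variables (A : Type) (W : weakNalg A).
Definition aimp (x y : A) : A := ast W (aci W x (ast W y)).
Definition aiff (x y : A) : A := aot W (aimp x y) (aimp y x).
Definition aniff (x y : A) : A := ast W (aiff x y).
Definition aniff3 (x y z : A) : A := aot W (aot W (aniff x y) (aniff x z)) (aniff y z).
Fixpoint eval (v : nat -> A) (p : Formula) : A :=
  match p with
  | Var n => v n
  | Ot a b => aot W (eval v a) (eval v b)
  | Ci a b => aci W (eval v a) (eval v b)
  | St a => ast W (eval v a)
  end.
End AlgOps.

(* A-bar = A ∪ {t, f} with t, f fresh and distinct *)
Inductive ext (A : Type) : Type :=
| El : A -> ext A
| tt_ : ext A
| ff_ : ext A.
Arguments tt_ {A}.
Arguments ff_ {A}.

Record NwModel (A : Type) := {
  alg : weakNalg A;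
  perp : ext A -> ext A -> Prop;
  ax_a : forall x, perp (El x) (El (ast alg x));
  ax_b : forall x y, perp (El x) (El (ast alg y)) -> perp (El y) (El (ast alg x)) -> x = y;
  ax_c : forall x y, perp (El x) (El y) <-> perp (El (aci alg x y)) tt_;
  ax_d : forall x, perp (El x) tt_ <-> perp (El (ast alg x)) ff_;
  ax_e : forall x y, (perp (El x) ff_ /\ perp (El y) ff_) <-> perp (El (aot alg x y)) ff_;
  ax_f : forall x y, perp (El (ast alg (aci alg x (ast alg y)))) (El (ast alg (aci alg x y)));
  ax_g : forall x y, perp (El x) (El y) -> perp (El x) ff_ -> perp (El y) tt_;
  ax_h : forall x y z,
      perp (El (aniff3 alg x y z))
           (El (ast alg (aimp alg (aimp alg x y) (aimp alg (aimp alg y z) (aimp alg x z)))))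
}.

Definition Fperp (A : Type) (M : NwModel A) (a : A) : Prop := perp M (El a) ff_.

(* homomorphisms Fm -> A are exactly the evaluation maps eval v *)
Definition in_NwTheta (Th : list Rule) (A : Type) (M : NwModel A) : Prop :=
  forall r, In r Th -> forall v : nat -> A,
    (forall d, In d (fst r) -> Fperp M (eval (alg M) v d)) ->
    Fperp M (eval (alg M) v (snd r)).

Definition NwTheta_conseq (Th : list Rule) (G : Formula -> Prop) (p : Formula) : Prop :=
  exists G' : list Formula, (forall g, In g G' -> G g) /\
    forall (A : Type) (M : NwModel A), in_NwTheta Th M ->
      forall v : nat -> A,
        (forall g, In g G' -> Fperp M (eval (alg M) v g)) ->
        Fperp M (eval (alg M) v p).

(* Main.v *)
Require Import Defs.
From Stdlib Require Import List Setoid ProofIrrelevance FunctionalExtensionality PropExtensionality IndefiniteDescription.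
Import ListNotations.

Section Sound.
Variables (A : Type) (M : NwModel A).

Lemma imp_iff x y : Fperp M (aimp (alg M) x y) <-> perp M (El x) (El (ast (alg M) y)).
Proof. unfold Fperp, aimp. rewrite <- ax_d. rewrite <- ax_c. reflexivity. Qed.

Lemma mp_sound x y : Fperp M (aimp (alg M) x y) -> Fperp M x -> Fperp M y.
Proof.
  intros H1 H2. apply imp_iff in H1. pose proof (ax_g M _ _ H1 H2) as H.
  apply ax_d in H. rewrite ast_invol in H. exact H.
Qed.

Lemma iff_eq x y : Fperp M (aiff (alg M) x y) -> x = y.
Proof.
  unfold aiff, Fperp; intro H; apply (proj2 (ax_e M _ _)) in H; destruct H as [H1 H2].
  apply (proj1 (imp_iff _ _)) in H1; apply (proj1 (imp_iff _ _)) in H2; exact (ax_b M x y H1 H2).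
Qed.

Lemma ax_sound p v : NeL_axiom p -> Fperp M (eval (alg M) v p).
Proof.
  destruct 1.
  - apply (proj2 (imp_iff _ _)). apply ax_a.
  - apply (proj2 (imp_iff _ _)). simpl. rewrite (aci_comm _ (eval (alg M) v q)). apply ax_a.
  - apply (proj2 (imp_iff _ _)). simpl. rewrite ast_invol. apply ax_a.
  - apply (proj2 (imp_iff _ _)). apply ax_f.
  - unfold Fperp. apply (ax_e M). split; apply (proj2 (imp_iff _ _)); simpl;
    rewrite aot_comm; apply ax_a.
  - apply (proj2 (imp_iff _ _)). simpl.
    set (P := eval (alg M) v p). set (Q := eval (alg M) v q). set (R := eval (alg M) v r).
    unfold aimp. rewrite (ast_invol _ Q). rewrite (aot_ci _ P Q (ast (alg M) R)). apply ax_a.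
  - apply (proj2 (imp_iff _ _)). apply ax_h.
Qed.

Lemma rep1_rep0 p q c c' : rep1 p q c c' -> rep0 p q c c'.
Proof. induction 1; constructor; auto. Qed.

Lemma eval_rep0 v p q c c' : rep0 p q c c' -> eval (alg M) v p = eval (alg M) v q ->
  eval (alg M) v c = eval (alg M) v c'.
Proof. induction 1; intros; simpl; auto; try rewrite IHrep0_1, IHrep0_2 by auto; auto.
  rewrite IHrep0; auto. Qed.

Lemma eval_subst v s p : eval (alg M) v (subst s p) = eval (alg M) (fun n => eval (alg M) v (s n)) p.
Proof. induction p; simpl; congruence. Qed.

End Sound.

Definition semL Th (G : Formula -> Prop) L := exists K, (forall g, In g K -> G g) /\
  forall A (M : NwModel A), in_NwTheta Th M -> forall v,
    (forall g, In g K -> Fperp M (eval (alg M) v g)) ->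
    forall d, In d L -> Fperp M (eval (alg M) v d).

Lemma semL_intro Th G L : (forall d, In d L -> NwTheta_conseq Th G d) -> semL Th G L.
Proof.
  induction L as [|a L IH]; intros H.
  - exists []; split; simpl; tauto.
  - destruct IH as [K2 [HK2 HS2]]. { intros; apply H; simpl; auto. }
    destruct (H a (or_introl eq_refl)) as [K1 [HK1 HS1]].
    exists (K1 ++ K2); split.
    + intros g Hg; apply in_app_iff in Hg; destruct Hg; auto.
    + intros A M HM v Hv d [<-|Hd].
      * apply HS1; auto. intros; apply Hv; apply in_app_iff; auto.
      * apply (HS2 A M HM v); auto. intros; apply Hv; apply in_app_iff; auto.
Qed.

Lemma sound_der Th G p : NeL_der G p -> NwTheta_conseq Th G p.
Proof.
  induction 1.
  - exists [p]; split.
    + intros g [<-|[]]; auto.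
    + intros; apply H1; simpl; auto.
  - exists []; split; [simpl; tauto|]. intros; apply ax_sound; auto.
  - destruct (semL_intro Th G [fimp p q; p]) as [K [HK HS]].
    { intros d [<-|[<-|[]]]; auto. }
    exists K; split; auto. intros A M HM v Hv.
    eapply mp_sound; [apply (HS A M HM v Hv (fimp p q)) | apply (HS A M HM v Hv p)]; simpl; auto.
  - destruct (semL_intro Th G [p; q]) as [K [HK HS]].
    { intros d [<-|[<-|[]]]; auto. }
    exists K; split; auto. intros A M HM v Hv.
    unfold Fperp; simpl. apply (proj1 (ax_e M _ _)); split; [apply (HS A M HM v Hv p) | apply (HS A M HM v Hv q)]; simpl; auto.
  - destruct (semL_intro Th G [fiff p q; c]) as [K [HK HS]].
    { intros d [<-|[<-|[]]]; auto. }
    exists K; split; auto. intros A M HM v Hv.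
    assert (E : eval (alg M) v c = eval (alg M) v c').
    { apply (eval_rep0 A M v p q); [apply rep1_rep0; assumption|]. apply (iff_eq A M). apply (HS A M HM v Hv (fiff p q)); simpl; auto. }
    rewrite <- E. apply (HS A M HM v Hv c); simpl; auto.
  - destruct IHNeL_der as [K [HK HS]]. exists K; split; auto.
    intros A M HM v Hv. specialize (HS A M HM v Hv). unfold Fperp in *; simpl in HS.
    apply (proj2 (ax_e M _ _)) in HS. tauto.
Qed.

Lemma sem_cons Th : consequence_relation (NwTheta_conseq Th).
Proof.
  split; [|split].
  - intros G p Hp. exists [p]; split.
    + intros g [<-|[]]; auto.
    + intros; apply H0; simpl; auto.
  - intros G G' p HG [K [HK HS]]. exists K; split; auto.
  - intros G D p HD [L [HL HS]].
    destruct (semL_intro Th G L) as [K [HK HS2]]. { intros d Hd; apply HD, HL, Hd. }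
    exists K; split; [auto|]. intros A M HM v Hv. apply (HS A M HM v). intros; apply (HS2 A M HM v Hv); auto.
Qed.

Lemma sem_subst Th : substitution_invariant (NwTheta_conseq Th).
Proof.
  intros s G p [K [HK HS]]. exists (map (subst s) K); split.
  - intros g Hg. apply in_map_iff in Hg. destruct Hg as [x [<- Hx]]. exists x; auto.
  - intros A M HM v Hv. rewrite eval_subst. apply (HS A M HM). intros g Hg.
    rewrite <- eval_subst. apply Hv. apply in_map; auto.
Qed.

Lemma sem_rules Th r : In r Th -> rule_holds (NwTheta_conseq Th) r.
Proof.
  intros Hr. exists (fst r); split; [auto|]. intros A M HM v Hv. apply (HM r Hr v Hv).
Qed.

Section Compl.
Variable Th : list Rule.
Variable D : Formula -> Prop.
Hypothesis Hax : forall p, NeL_axiom p -> D p.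
Hypothesis Hmp : forall p q, D (fimp p q) -> D p -> D q.
Hypothesis Hadj : forall p q, D p -> D q -> D (Ot p q).
Hypothesis Hrep : forall p q c c', D (fiff p q) -> D c -> rep1 p q c c' -> D c'.
Hypothesis Hth : forall r, In r Th -> forall s,
  (forall d, In d (fst r) -> D (subst s d)) -> D (subst s (snd r)).
Hypothesis Hsimp : forall p q, D (Ot p q) -> D p.

Lemma rep0_cases p q c c' : rep0 p q c c' -> c = c' \/ rep1 p q c c'.
Proof.
  induction 1; auto using rep1.
  - destruct IHrep0_1 as [<-|], IHrep0_2 as [<-|]; auto; right; eauto using rep1, rep0, rep1_rep0.
  - destruct IHrep0_1 as [<-|], IHrep0_2 as [<-|]; auto; right; eauto using rep1, rep0, rep1_rep0.
  - destruct IHrep0 as [<-|]; auto; right; eauto using rep1.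
Qed.

Lemma Drep0 p q c c' : D (fiff p q) -> D c -> rep0 p q c c' -> D c'.
Proof. intros H1 H2 H3. destruct (rep0_cases _ _ _ _ H3) as [<-|]; eauto. Qed.

Definition E a b := D (fiff a b).

Lemma Erefl p : E p p.
Proof. apply Hadj; apply Hax; constructor. Qed.

Lemma Esym p q : E p q -> E q p.
Proof. intro H. eapply Hrep; [apply Hax, (A5 (fimp p q) (fimp q p)) | exact H | apply rep1_here]. Qed.

Lemma Etrans p q r : E p q -> E q r -> E p r.
Proof.
  intros H1 H2. eapply (Drep0 q r); [exact H2 | exact H1 |].
  unfold fiff, fimp. repeat constructor.
Qed.

Lemma Eresp p q : E p q -> D p -> D q.
Proof. intros H1 H2. eapply Hrep; [exact H1 | exact H2 | apply rep1_here]. Qed.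

Lemma Econg p q X X' : E p q -> rep0 p q X X' -> E X X'.
Proof.
  intros H R. eapply (Drep0 p q); [exact H | apply (Erefl X) |].
  unfold fiff, fimp. repeat constructor; auto.
Qed.

Lemma E_Ot a a' b b' : E a a' -> E b b' -> E (Ot a b) (Ot a' b').
Proof.
  intros H1 H2. apply Etrans with (Ot a' b).
  - eapply Econg; [exact H1|]. repeat constructor.
  - eapply Econg; [exact H2|]. repeat constructor.
Qed.

Lemma E_Ci a a' b b' : E a a' -> E b b' -> E (Ci a b) (Ci a' b').
Proof.
  intros H1 H2. apply Etrans with (Ci a' b).
  - eapply Econg; [exact H1|]. repeat constructor.
  - eapply Econg; [exact H2|]. repeat constructor.
Qed.

Lemma E_St a a' : E a a' -> E (St a) (St a').
Proof. intros H1. eapply Econg; [exact H1|]. repeat constructor. Qed.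

Lemma E_ci_comm p q : E (Ci p q) (Ci q p).
Proof. apply Hadj; apply Hax; constructor. Qed.

Lemma E_ot_comm p q : E (Ot p q) (Ot q p).
Proof. apply Hax; constructor. Qed.

Lemma E_dn p : E p (St (St p)).
Proof.
  apply Hadj; [apply Hax; constructor|].
  eapply Eresp; [| apply (Hax _ (A1 (St p)))].
  apply E_St, E_ci_comm.
Qed.

Lemma D2half x y w : D (fimp (Ci (Ot x w) y) (Ci (Ot x y) w)).
Proof.
  pose proof (Hax _ (A6 x y (St w))) as H.
  eapply Eresp; [| exact H].
  unfold fimp.
  apply Etrans with (St (Ci (St (Ci (Ot x y) w)) (St (St (Ci (Ot x w) y))))).
  - apply E_St, E_Ci.
    + apply E_St, E_Ci; [apply Erefl|]. apply Esym, E_dn.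
    + apply E_St, E_St, E_Ci; [|apply Esym, E_dn].
      apply E_Ot; [apply Erefl|]. apply Esym, E_dn.
  - apply Etrans with (St (Ci (St (Ci (Ot x y) w)) (Ci (Ot x w) y))).
    + apply E_St, E_Ci; [apply Erefl|]. apply Esym, E_dn.
    + apply E_St, E_ci_comm.
Qed.

Lemma E_D2 x y w : E (Ci (Ot x y) w) (Ci (Ot x w) y).
Proof. apply Hadj; apply D2half. Qed.

Definition cls a : Formula -> Prop := fun r => E a r.
Definition Q := {P : Formula -> Prop | exists a, P = cls a}.
Definition mk a : Q := exist _ (cls a) (ex_intro _ a eq_refl).
Definition rep (X : Q) : Formula :=
  proj1_sig (constructive_indefinite_description _ (proj2_sig X)).

Lemma rep_spec X : proj1_sig X = cls (rep X).
Proof. unfold rep. destruct (constructive_indefinite_description _ _). simpl. auto. Qed.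

Lemma Q_ext (X Y : Q) : proj1_sig X = proj1_sig Y -> X = Y.
Proof. destruct X, Y; simpl; intros; subst; f_equal; apply proof_irrelevance. Qed.

Lemma cls_eq a b : E a b -> cls a = cls b.
Proof.
  intros H. extensionality r. apply propositional_extensionality. unfold cls; split; intro H'.
  - eapply Etrans; [apply Esym, H | exact H'].
  - eapply Etrans; [exact H | exact H'].
Qed.

Lemma cls_E a b : cls a = cls b -> E a b.
Proof. intros H. assert (H1 : cls a a) by apply Erefl. rewrite H in H1. apply Esym, H1. Qed.

Lemma mk_eq a b : E a b -> mk a = mk b.
Proof. intros; apply Q_ext; simpl; apply cls_eq; auto. Qed.

Lemma mk_rep X : mk (rep X) = X.
Proof. apply Q_ext; simpl; symmetry; apply rep_spec. Qed.

Lemma rep_mk a : E (rep (mk a)) a.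
Proof. apply Esym, cls_E. rewrite <- rep_spec. reflexivity. Qed.

Definition qot X Y := mk (Ot (rep X) (rep Y)).
Definition qci X Y := mk (Ci (rep X) (rep Y)).
Definition qst X := mk (St (rep X)).

Lemma qot_comm X Y : qot X Y = qot Y X.
Proof. apply mk_eq, E_ot_comm. Qed.
Lemma qci_comm X Y : qci X Y = qci Y X.
Proof. apply mk_eq, E_ci_comm. Qed.
Lemma qst_invol X : qst (qst X) = X.
Proof.
  transitivity (mk (rep X)); [|apply mk_rep]. apply mk_eq.
  eapply Etrans; [apply E_St, rep_mk | apply Esym, E_dn].
Qed.
Lemma qot_ci X Y Z : qci (qot X Y) Z = qci (qot X Z) Y.
Proof.
  apply mk_eq. eapply Etrans; [apply E_Ci; [apply rep_mk | apply Erefl]|].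
  eapply Etrans; [apply E_D2|]. apply Esym, E_Ci; [apply rep_mk | apply Erefl].
Qed.

Definition QW : weakNalg Q := Build_weakNalg qot qci qst qot_comm qci_comm qst_invol qot_ci.

Lemma rep_eval v p : E (rep (eval QW v p)) (subst (fun n => rep (v n)) p).
Proof.
  induction p; simpl.
  - apply Erefl.
  - change (E (rep (mk (Ot (rep (eval QW v p1)) (rep (eval QW v p2))))) (Ot (subst (fun n => rep (v n)) p1) (subst (fun n => rep (v n)) p2))).
    eapply Etrans; [apply rep_mk | apply E_Ot; auto].
  - change (E (rep (mk (Ci (rep (eval QW v p1)) (rep (eval QW v p2))))) (Ci (subst (fun n => rep (v n)) p1) (subst (fun n => rep (v n)) p2))).
    eapply Etrans; [apply rep_mk | apply E_Ci; auto].
  - change (E (rep (mk (St (rep (eval QW v p))))) (St (subst (fun n => rep (v n)) p))).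
    eapply Etrans; [apply rep_mk | apply E_St; auto].
Qed.

Definition qperp (x y : ext Q) : Prop :=
  match x, y with
  | El X, El Y => D (St (Ci (rep X) (rep Y)))
  | El X, ff_ => D (rep X)
  | El X, tt_ => D (St (rep X))
  | _, _ => False
  end.

Lemma Diff p q : E p q -> (D p <-> D q).
Proof. intros H; split; apply Eresp; auto using Esym. Qed.

Lemma perp_eval v p q : qperp (El (eval QW v p)) (El (eval QW v q)) <->
  D (St (Ci (subst (fun n => rep (v n)) p) (subst (fun n => rep (v n)) q))).
Proof. simpl. apply Diff. apply E_St, E_Ci; apply rep_eval. Qed.

Lemma F_eval v p : qperp (El (eval QW v p)) ff_ <-> D (subst (fun n => rep (v n)) p).
Proof. simpl. apply Diff. apply rep_eval. Qed.

Lemma pa x : qperp (El x) (El (qst x)).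
Proof.
  simpl. eapply Eresp; [| apply (Hax _ (A1 (rep x)))].
  apply E_St, E_Ci; [apply Erefl | apply Esym, rep_mk].
Qed.

Lemma pb x y : qperp (El x) (El (qst y)) -> qperp (El y) (El (qst x)) -> x = y.
Proof.
  simpl; intros H1 H2.
  assert (K1 : D (fimp (rep x) (rep y))).
  { eapply Eresp; [| exact H1]. apply E_St, E_Ci; [apply Erefl | apply rep_mk]. }
  assert (K2 : D (fimp (rep y) (rep x))).
  { eapply Eresp; [| exact H2]. apply E_St, E_Ci; [apply Erefl | apply rep_mk]. }
  rewrite <- (mk_rep x), <- (mk_rep y). apply mk_eq. apply Hadj; auto.
Qed.

Lemma pc x y : qperp (El x) (El y) <-> qperp (El (qci x y)) tt_.
Proof. simpl. apply Diff. apply E_St, Esym, rep_mk. Qed.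

Lemma pd x : qperp (El x) tt_ <-> qperp (El (qst x)) ff_.
Proof. simpl. apply Diff. apply Esym, rep_mk. Qed.

Lemma pe x y : (qperp (El x) ff_ /\ qperp (El y) ff_) <-> qperp (El (qot x y)) ff_.
Proof.
  simpl. rewrite <- (Diff _ _ (Esym _ _ (rep_mk (Ot (rep x) (rep y))))). split.
  - intros [H1 H2]; apply Hadj; auto.
  - intros H; split; [eapply Hsimp; exact H|].
    eapply Hsimp. eapply Eresp; [apply E_ot_comm | exact H].
Qed.

Lemma pf x y : qperp (El (qst (qci x (qst y)))) (El (qst (qci x y))).
Proof.
  set (v := fun n => match n with 0 => x | _ => y end).
  refine (proj2 (perp_eval v (St (Ci (Var 0) (St (Var 1)))) (St (Ci (Var 0) (Var 1)))) _).
  simpl. exact (Hax _ (A4 (rep x) (rep y))).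
Qed.

Lemma pg x y : qperp (El x) (El y) -> qperp (El x) ff_ -> qperp (El y) tt_.
Proof.
  simpl; intros H1 H2. apply (Hmp (rep x)); auto.
  eapply Eresp; [| exact H1]. apply E_St, E_Ci; [apply Erefl|]. apply E_dn.
Qed.

Lemma ph x y z :
  qperp (El (aniff3 QW x y z))
        (El (ast QW (aimp QW (aimp QW x y) (aimp QW (aimp QW y z) (aimp QW x z))))).
Proof.
  set (v := fun n => match n with 0 => x | 1 => y | _ => z end).
  refine (proj2 (perp_eval v (fniff3 (Var 0) (Var 1) (Var 2))
     (St (fimp (fimp (Var 0) (Var 1)) (fimp (fimp (Var 1) (Var 2)) (fimp (Var 0) (Var 2)))))) _).
  simpl. exact (Hax _ (A7 (rep x) (rep y) (rep z))).
Qed.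

Definition QM : NwModel Q := Build_NwModel QW qperp pa pb pc pd pe pf pg ph.

Lemma QM_Theta : in_NwTheta Th QM.
Proof.
  intros r Hr v Hv. unfold Fperp. apply (proj2 (F_eval v _)).
  apply Hth; auto. intros d Hd. apply (proj1 (F_eval v _)). apply Hv; auto.
Qed.

Lemma E_subst s p : (forall n, E (s n) (Var n)) -> E (subst s p) p.
Proof. intros H; induction p; simpl; auto using E_Ot, E_Ci, E_St. Qed.

Lemma QM_true p : Fperp QM (eval QW (fun n => mk (Var n)) p) <-> D p.
Proof.
  unfold Fperp. change (qperp (El (eval QW (fun n => mk (Var n)) p)) ff_ <-> D p).
  rewrite F_eval. apply Diff. apply E_subst. intros n; apply rep_mk.
Qed.

End Compl.

Theorem theorem4p7 (Th : list Rule) (G : Formula -> Prop) (p : Formula) :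
  NeL_Theta_der Th G p <-> NwTheta_conseq Th G p.
Proof.
  split.
  - intros H. apply H.
    + apply sem_cons.
    + apply sem_subst.
    + intros; apply sound_der; auto.
    + apply sem_rules.
  - intros [K [HK HS]] C Hcr Hsi Hnel Hrules.
    destruct Hcr as [Hrefl [Hmono Hcut]].
    set (D := C G).
    assert (Hax : forall q, NeL_axiom q -> D q).
    { intros; apply Hnel; apply d_ax; auto. }
    assert (Hmp : forall a b, D (fimp a b) -> D a -> D b).
    { intros a b H1 H2. apply (Hcut G (fun x => x = fimp a b \/ x = a)).
      - intros d [->| ->]; auto.
      - apply Hnel. apply (@d_mp _ a b); apply d_hyp; auto. }
    assert (Hadj : forall a b, D a -> D b -> D (Ot a b)).
    { intros a b H1 H2. apply (Hcut G (fun x => x = a \/ x = b)).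
      - intros d [->| ->]; auto.
      - apply Hnel. apply d_adj; apply d_hyp; auto. }
    assert (Hrep : forall a b c c', D (fiff a b) -> D c -> rep1 a b c c' -> D c').
    { intros a b c c' H1 H2 H3. apply (Hcut G (fun x => x = fiff a b \/ x = c)).
      - intros d [->| ->]; auto.
      - apply Hnel. eapply d_rep; [apply d_hyp; auto | apply d_hyp; auto | exact H3]. }
    assert (Hsimp : forall a b, D (Ot a b) -> D a).
    { intros a b H1. apply (Hcut G (fun x => x = Ot a b)).
      - intros d ->; auto.
      - apply Hnel. eapply d_simp. apply d_hyp; auto. }
    assert (Hth : forall r, In r Th -> forall s,
      (forall d, In d (fst r) -> D (subst s d)) -> D (subst s (snd r))).
    { intros r Hr s Hs. apply (Hcut G (subst_set s (fun x => In x (fst r)))).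
      - intros d [g [Hg ->]]; apply Hs; auto.
      - apply Hsi. apply Hrules; auto. }
    apply (proj1 (QM_true D Hax Hmp Hadj Hrep Hsimp p)).
    apply HS.
    + apply (QM_Theta Th D Hax Hmp Hadj Hrep Hth Hsimp).
    + intros g Hg. apply (proj2 (QM_true D Hax Hmp Hadj Hrep Hsimp g)).
      apply Hrefl; auto.
Qed.
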